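(* Fix integers $h\ge0$, $n\ge1$, a multi-index $\gamma\in\mathbb{Z}_{\ge0}^n$, and set $k=|\gamma|$. Then for each of the $k^h$ functions $\pi:[h]\to[k]$ and each $r\in[k]$ there exist integers $h'_{\pi,r}\in\{0,1,\dots,h\}$, $t'_{\pi,r}\ge0$ and $j'_{\pi,r}\in[n]$ (depending only on $h,\gamma,\pi,r$) such that for every sequence $L^{(1)},\dots,L^{(T)}\in\mathbb{R}^n$ and every $t\in[T-h]$, $$(D_h(L^\gamma))^{(t)}=\sum_{\pi:[h]\to[k]}\prod_{r=1}^k\big(D_{h'_{\pi,r}}(L(j'_{\pi,r}))\big)^{(t+t'_{\pi,r})}.$$ Moreover: (1) for each $\pi$ and $r$, $h'_{\pi,r}=|\{q\in[h]:\pi(q)=r\}|$, so $\sum_{r=1}^kh'_{\pi,r}=h$; (2) for each $\pi,r$, $0\le t'_{\pi,r}+h'_{\pi,r}\le h$; (3) for each $\pi$ and each $j\in[n]$, $\gamma_j=|\{r\in[k]:j'_{\pi,r}=j\}|$.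
   Context: $L^\gamma$ denotes the scalar sequence $(L^\gamma)^{(t)}=\prod_{j=1}^n(L^{(t)}(j))^{\gamma_j}$, and $L(j)$ the scalar sequence $(L^{(t)}(j))_t$ of $j$-th coordinates. Finite differences: $(D_0L)^{(t)}=L^{(t)}$ and $(D_hL)^{(t)}=(D_{h-1}L)^{(t+1)}-(D_{h-1}L)^{(t)}$. An empty sum is $0$ and an empty product is $1$. *)

(* Defs.v *)
From HB Require Import structures.
From mathcomp Require Import all_boot all_order all_algebra.
From mathcomp Require Import reals.
Set Implicit Arguments. Unset Strict Implicit. Unset Printing Implicit Defensive.
Import Order.TTheory GRing.Theory Num.Theory.
Local Open Scope ring_scope.

Fixpoint D {R : pzRingType} (h : nat) (f : nat -> R) : nat -> R :=
  match h with
  | 0 => f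
  | h'.+1 => fun t => D h' f t.+1 - D h' f t
  end.

Definition Lpow {R : pzRingType} {n : nat} (L : nat -> 'I_n -> R) (gamma : 'I_n -> nat)
  : nat -> R := fun t => \prod_(j < n) L t j ^+ gamma j.

Definition Lcoord {R : pzRingType} {n : nat} (L : nat -> 'I_n -> R) (j : 'I_n)
  : nat -> R := fun t => L t j.

(* Main.v *)
Require Import Defs.
From HB Require Import structures.
From mathcomp Require Import all_boot all_order all_algebra.
From mathcomp Require Import reals.
Import Order.TTheory GRing.Theory Num.Theory.
Local Open Scope ring_scope.

Lemma card_sum m (P : pred 'I_m) : #|finset P| = (\sum_(q < m) P q)%N.
Proof.
rewrite -sum1_card big_mkcond /=; apply: eq_bigr => q _; rewrite inE.
by case: (P q).
Qed.

Definition ext {h k} (pi : {ffun 'I_h -> 'I_k}) (r : 'I_k) : {ffun 'I_h.+1 -> 'I_k} :=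
  [ffun q : 'I_h.+1 => if unlift ord_max q is Some q' then pi q' else r].

Lemma ext_widen h k (pi : {ffun 'I_h -> 'I_k}) r q :
  ext pi r (widen_ord (leqnSn h) q) = pi q.
Proof.
rewrite ffunE.
have -> : widen_ord (leqnSn h) q = lift ord_max q by apply: val_inj; rewrite /= /bump leqNgt ltn_ord.
by rewrite liftK.
Qed.

Lemma ext_max h k (pi : {ffun 'I_h -> 'I_k}) r : ext pi r ord_max = r.
Proof. by rewrite ffunE unlift_none. Qed.

Lemma card_ext_eq h k (pi : {ffun 'I_h -> 'I_k}) r s :
  #|[set q | ext pi r q == s]| = (#|[set q | pi q == s]| + (r == s))%N.
Proof.
rewrite !card_sum big_ord_recr /= ext_max; congr (_ + _)%N.
by apply: eq_bigr => q _; rewrite ext_widen.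
Qed.

Lemma card_ext_lt h k (pi : {ffun 'I_h -> 'I_k}) r (s : 'I_k) :
  #|[set q | (ext pi r q < s)%N]| = (#|[set q | (pi q < s)%N]| + (r < s)%N)%N.
Proof.
rewrite !card_sum big_ord_recr /= ext_max; congr (_ + _)%N.
by apply: eq_bigr => q _; rewrite ext_widen.
Qed.

Lemma tele (R : realType) (f g : nat -> R) m :
  \prod_(s < m) f s - \prod_(s < m) g s =
  \sum_(r < m) \prod_(s < m)
     (if (s < r)%N then g s else if (s == r :> nat) then f s - g s else f s).
Proof.
elim: m => [|m IH]; first by rewrite !big_ord0 subrr.
rewrite big_ord_recr [X in _ - X]big_ord_recr /= big_ord_recr /=.
have E1 : \sum_(i < m) \prod_(s < m.+1)
   (if (s < i)%N then g s else if (s == i :> nat) then f s - g s else f s) =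
   (\prod_(s < m) f s - \prod_(s < m) g s) * f m.
  rewrite IH mulr_suml; apply: eq_bigr => i _.
  rewrite big_ord_recr /=.
  have hi := ltn_ord i.
  by rewrite ltnNge (ltnW hi) /= (gtn_eqF hi).
rewrite E1 big_ord_recr /= ltnn eqxx.
have -> : \prod_(i < m) (if (widen_ord (leqnSn m) i < m)%N then g (widen_ord (leqnSn m) i)
     else if widen_ord (leqnSn m) i == m :> nat then
       f (widen_ord (leqnSn m) i) - g (widen_ord (leqnSn m) i) else f (widen_ord (leqnSn m) i))
   = \prod_(i < m) g i.
  by apply: eq_bigr => i _; rewrite /= ltn_ord.
rewrite mulrBl mulrBr; set A := \prod_(i < m) f i; set B := \prod_(i < m) g i.
by rewrite addrA subrK.
Qed.

Lemma teleI (R : realType) m (f g : 'I_m -> R) :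
  \prod_(s < m) f s - \prod_(s < m) g s =
  \sum_(r < m) \prod_(s < m)
     (if (s < r)%N then g s else if (s == r :> nat) then f s - g s else f s).
Proof.
case: m f g => [|m] f g; first by rewrite !big_ord0 subrr.
have := tele _ (fun n => f (inord n)) (fun n => g (inord n)) m.+1.
have I (s : 'I_m.+1) : inord s = s by apply: val_inj; rewrite /= inordK.
move=> E.
transitivity (\prod_(s < m.+1) f (inord s) - \prod_(s < m.+1) g (inord s)).
  by congr (_ - _); apply: eq_bigr => s _; rewrite I.
rewrite E; apply: eq_bigr => r _; apply: eq_bigr => s _; by rewrite I.
Qed.

Lemma Dprod (R : realType) k (F : nat -> nat -> R) h t :
  D h (fun t => \prod_(r < k) F r t) t =
  \sum_(pi : {ffun 'I_h -> 'I_k})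
     \prod_(r < k) D #|[set q | pi q == r]| (F r) (t + #|[set q | (pi q < r)%N]|)%N.
Proof.
elim: h t => [|h IH] t.
  have f0 : {ffun 'I_0 -> 'I_k} := [ffun q : 'I_0 => False_rect 'I_k (notF (ltn_ord q))].
  have all0 (p : {ffun 'I_0 -> 'I_k}) : p = f0 by apply/ffunP => -[].
  rewrite [LHS]/= (bigD1 f0) //= [X in _ + X]big1 ?addr0; last first.
    by move=> p; rewrite (all0 p) eqxx.
  by apply: eq_bigr => r _; rewrite !card_sum !big_ord0 addn0.
rewrite [LHS]/= (IH t.+1) (IH t) -sumrB.
under eq_bigr => pi _ do rewrite teleI.
rewrite pair_big /=.
rewrite [RHS](reindex (fun p : {ffun 'I_h -> 'I_k} * 'I_k => ext p.1 p.2)) /=.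
  apply: eq_bigr => [[pi r]] _ /=; apply: eq_bigr => s _.
  rewrite card_ext_eq card_ext_lt.
  case: (ltngtP s r) => H.
  - by rewrite -[r == s]val_eqE (gtn_eqF H) /= !addn0.
  - by rewrite -[r == s]val_eqE (ltn_eqF H) /= !addn0 addn1 addnS addSn.
  - have Esr : s = r := val_inj H. subst s. by rewrite eqxx /= addn0 addn1 addSn.
apply: onW_bij.
exists (fun p : {ffun 'I_h.+1 -> 'I_k} => ([ffun q => p (lift ord_max q)], p ord_max)).
  move=> [pi r] /=; congr pair; last exact: ext_max.
  by apply/ffunP => q; rewrite !ffunE liftK.
move=> p /=; apply/ffunP => q; rewrite ffunE.
by case: unliftP => [j ->|->]; rewrite ?ffunE.
Qed.
Lemma D_ext (R : realType) (f g : nat -> R) h t :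
  (forall x, f x = g x) -> D h f t = D h g t.
Proof. by move=> E; elim: h t => [|h IH] t //=; rewrite !IH. Qed.

Theorem lemma4p5 (R : realType) (h n : nat) (gamma : 'I_n -> nat) :
  (0 < n)%N ->
  let k := (\sum_(j < n) gamma j)%N in
  exists (hp tp : {ffun 'I_h -> 'I_k} -> 'I_k -> nat)
         (jp : {ffun 'I_h -> 'I_k} -> 'I_k -> 'I_n),
    (forall pi r, hp pi r <= h)%N /\
    (forall pi r, hp pi r = #|[set q : 'I_h | pi q == r]|)%N /\
    (forall pi, \sum_(r < k) hp pi r = h)%N /\
    (forall pi r, tp pi r + hp pi r <= h)%N /\
    (forall pi (j : 'I_n), gamma j = #|[set r : 'I_k | jp pi r == j]|) /\
    (forall (T : nat) (L : nat -> 'I_n -> R) (t : nat),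
       (1 <= t)%N -> (t <= T - h)%N ->
       D h (Lpow L gamma) t =
       \sum_(pi : {ffun 'I_h -> 'I_k})
          \prod_(r < k) D (hp pi r) (Lcoord L (jp pi r)) (t + tp pi r)%N).
Proof.
move=> n0 k.
pose j0 : 'I_n := Ordinal n0.
pose sq := flatten [seq nseq (gamma j) j | j <- enum 'I_n].
have Hsz : size sq = k.
  rewrite size_flatten /shape -map_comp sumnE big_map big_enum /=.
  by apply: eq_big => // i; rewrite size_nseq.
pose c (r : 'I_k) := nth j0 sq r.
exists (fun (pi : {ffun 'I_h -> 'I_k}) (r : 'I_k) => #|[set q | pi q == r]|), (fun (pi : {ffun 'I_h -> 'I_k}) (r : 'I_k) => #|[set q | (pi q < r)%N]|),
  (fun _ r => c r).
split; [|split; [|split; [|split; [|split]]]].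
- move=> pi r; exact: leq_trans (max_card _) (eq_leq (card_ord h)).
- by [].
- move=> pi; under eq_bigr do rewrite card_sum.
  rewrite exchange_big /=.
  transitivity (\sum_(q < h) 1)%N; last by rewrite sum_nat_const card_ord muln1.
  apply: eq_bigr => q _.
  rewrite (bigD1 (pi q)) //= eqxx big1 // => r /negbTE; rewrite eq_sym => ->.
  by [].
- move=> pi r; rewrite !card_sum -big_split /=.
  rewrite -[X in (_ <= X)%N](card_ord h) -sum1_card.
  apply: leq_sum => q _.
  case: (ltngtP (pi q) r) => H.
  + by rewrite -[pi q == r]val_eqE (ltn_eqF H).
  + by rewrite -[pi q == r]val_eqE (gtn_eqF H).
  + by rewrite (val_inj H : pi q = r) eqxx ?ltnn.
- move=> pi j; rewrite card_sum.
  rewrite -(big_mkord xpredT (fun r => (nth j0 sq r == j) : nat)) -Hsz.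
  rewrite -(big_nth j0 xpredT (fun x => (x == j) : nat)) big_flatten big_map big_enum /=.
  rewrite (bigD1 j) //= big_nseq iter_addn_0 eqxx mul1n big1 ?addn0 // => i /negbTE Hi.
  by rewrite big_nseq iter_addn_0 Hi.
- move=> T L t _ _.
  rewrite (@D_ext R _ (fun t => \prod_(r < k) (fun (r : nat) t => L t (nth j0 sq r)) r t)).
    exact: (Dprod R k (fun (r : nat) t => L t (nth j0 sq r)) h t).
  move=> x; rewrite /Lpow.
  rewrite -(big_mkord xpredT (fun r => L x (nth j0 sq r))) -Hsz.
  rewrite -(big_nth j0 xpredT (fun y => L x y)) big_flatten big_map big_enum /=.
  by apply: eq_big => // i _; rewrite big_nseq iter_mulr_1.
Qed.
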